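(* For any $C\ge2$ and any $\eta\ge2$, there exists a forward-KL-regularized linear bandit instance (of dimension $2$) such that $C^{\pi^*}\ge C/2$ and $D^2_{\pi^*}=\Theta(1)$.
   Context: A forward-KL-regularized linear bandit instance (single context) consists of a finite action set $\mathcal A$, a feature map $\phi:\mathcal A\to\mathbb R^d$, a parameter set $\Theta\subset\mathbb R^d$ defining $\mathcal F=\{a\mapsto\langle\theta,\phi(a)\rangle:\theta\in\Theta\}$, a true parameter $\theta^*\in\Theta$ with $r(a)=\langle\theta^*,\phi(a)\rangle\in[0,1]$, a full-support reference policy $\pi^{\mathrm{ref}}\in\Delta(\mathcal A)$, and $\eta>0$. $\pi^*=\arg\max_{\pi\in\Delta(\mathcal A)}\sum_a r(a)\pi(a)-\eta^{-1}\mathrm{KL}(\pi^{\mathrm{ref}}\|\pi)$; $C^{\pi^*}=\max_a\pi^*(a)/\pi^{\mathrm{ref}}(a)$; $D^2(a)=\sup_{g,h\in\mathcal F}\frac{(g(a)-h(a))^2}{\mathbb E_{a'\sim\pi^{\mathrm{ref}}}[(g(a')-h(a'))^2]}$; $D^2_{\pi^*}=\mathbb E_{a\sim\pi^*}D^2(a)$. $\Theta(1)$ means bounded above and below by absolute positive constants. *)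

(* Defs.v *)
From HB Require Import structures.
From mathcomp Require Import all_boot all_order all_algebra.
From mathcomp Require Import all_classical all_reals all_analysis.
Set Implicit Arguments. Unset Strict Implicit. Unset Printing Implicit Defensive.
Import Order.TTheory GRing.Theory Num.Theory.
Local Open Scope classical_set_scope.
Local Open Scope ring_scope.

Section KLBandit.
Variable R : realType.

Definition inner (d : nat) (th x : 'I_d -> R) : R := \sum_(i < d) th i * x i.

Variable A : finType.

Definition is_policy (p : A -> R) : Prop :=
  (forall a, 0 <= p a) /\ \sum_(a : A) p a = 1.

Definition full_support (p : A -> R) : Prop := forall a, 0 < p a.

(* KL(p || q) = sum_a p(a) log (p(a)/q(a)), used only for full-support p, q *)
Definition KL (p q : A -> R) : R := \sum_(a : A) p a * ln (p a / q a).

Definition objective (r ref : A -> R) (eta : R) (p : A -> R) : R :=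
  \sum_(a : A) r a * p a - eta^-1 * KL ref p.

(* Policies without
   full support have KL(pi_ref||pi) = +oo (pi_ref has full support), hence
   objective -oo, so it suffices to compare against full-support policies. *)
Definition is_opt_policy (r ref : A -> R) (eta : R) (p : A -> R) : Prop :=
  is_policy p /\ full_support p /\
  forall p', is_policy p' -> full_support p' ->
    objective r ref eta p' <= objective r ref eta p.

Definition cover_coef (ref p : A -> R) : R :=
  \big[Num.max/0]_(a : A) (p a / ref a).

(* A pair with zero
   denominator (hence g = h on all of A, as ref has full support)
   contributes the value 0 (convention 0/0 = 0). *)
Definition D2_ratio (d : nat) (phi : A -> 'I_d -> R) (ref : A -> R)
    (th1 th2 : 'I_d -> R) (a : A) : R :=
  let diff := fun a' => inner th1 (phi a') - inner th2 (phi a') in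
  let den := \sum_(a' : A) ref a' * (diff a') ^+ 2 in
  if den == 0 then 0 else (diff a) ^+ 2 / den.

Definition D2 (d : nat) (Theta : set ('I_d -> R)) (phi : A -> 'I_d -> R)
    (ref : A -> R) (a : A) : R :=
  sup [set x | exists th1 th2, Theta th1 /\ Theta th2 /\
                  x = D2_ratio phi ref th1 th2 a].

Definition D2_pi (d : nat) (Theta : set ('I_d -> R)) (phi : A -> 'I_d -> R)
    (ref p : A -> R) : R :=
  \sum_(a : A) p a * D2 Theta phi ref a.

End KLBandit.

(* Main.v *)
From HB Require Import structures.
From mathcomp Require Import all_boot all_order all_algebra.
From mathcomp Require Import all_classical all_reals all_analysis.
From mathcomp Require Import ring lra.
Require Import Defs.
Import Order.TTheory GRing.Theory Num.Theory.
Local Open Scope classical_set_scope.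
Local Open Scope ring_scope.

Lemma ln_le_sub1 (R : realType) (x : R) : 0 < x -> ln x <= x - 1.
Proof.
move=> x0; have := expR_ge1Dx (ln x); rewrite lnK ?posrE //; lra.
Qed.

Lemma ln_eq_sub1 (R : realType) (x : R) : 0 < x -> x - 1 <= ln x -> x = 1.
Proof.
move=> x0 h; have [/eqP|hne] := eqVneq (ln x) 0.
  by rewrite ln_eq0 // => /eqP.
have := expR_gt1Dx hne; rewrite lnK ?posrE //; lra.
Qed.

Lemma sum_bool (R : realType) (F : bool -> R) : \sum_(a : bool) F a = F true + F false.
Proof. by rewrite big_bool. Qed.

Lemma max_bool (R : realType) (F : bool -> R) : \big[Num.max/0]_(a : bool) F a = Num.max (F true) (Num.max (F false) 0).
Proof. by rewrite /index_enum !unlock. Qed.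

Lemma inner2 (R : realType) (th x : 'I_2 -> R) : inner th x = th ord0 * x ord0 + th (lift ord0 ord0) * x (lift ord0 ord0).
Proof. by rewrite /inner !big_ord_recl big_ord0 addr0. Qed.
Lemma alg0 (R : realType) (C eta u : R) : 2 <= C -> 2 <= eta ->
  u * 1 + (1 - u) * 2^-1 - ((1 - 2 * (1 - C^-1) / eta) * 1 + (1 - (1 - 2 * (1 - C^-1) / eta)) * 2^-1) =
  - eta^-1 * ((1 - 2 * (1 - C^-1) / eta) / C * (u / (1 - 2 * (1 - C^-1) / eta) - 1) + (1 - (1 - 2 * (1 - C^-1) / eta) / C) * ((1 - u) / (1 - (1 - 2 * (1 - C^-1) / eta)) - 1)).
Proof.
move=> hC he.
have C0 : C != 0 by apply/negP => /eqP h; lra.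
have e0 : eta != 0 by apply/negP => /eqP h; lra.
have ht' : 1 - (1 - 2 * (1 - C^-1) / eta) = 2 * (C - 1) / (C * eta).
  by field; apply/andP.
have ht : (1 - 2 * (1 - C^-1) / eta) = (C * eta - 2 * (C - 1)) / (C * eta).
  by field; apply/andP.
rewrite ht' ht.
field.
have h1 : C - 1 != 0 by apply/negP => /eqP C1; lra.
have h2 : C * eta - 2 * (C - 1) != 0 by apply/negP => /eqP C1; nra.
by rewrite e0 C0 h1 h2.
Qed.

Section Inst.
Variable R : realType.
Variables C eta : R.
Hypothesis hC : 2 <= C.
Hypothesis he : 2 <= eta.
Ltac hyps := have hC' := hC; have he' := he.

Definition tt : R := 1 - 2 * (1 - C^-1) / eta.
Definition qq : R := tt / C.
Definition rr (b : bool) : R := if b then 1 else 2^-1.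
Definition rf (b : bool) : R := if b then qq else 1 - qq.
Definition ps (b : bool) : R := if b then tt else 1 - tt.
Definition phi (b : bool) : 'I_2 -> R := fun _ => rr b / 2.
Definition thstar : 'I_2 -> R := fun _ => 1.
Definition Theta : set ('I_2 -> R) := fun th => th = thstar \/ th = (fun _ => 0).

Lemma tt_gt0 : 0 < tt.
Proof.
hyps.
have C0 : C != 0 by apply: lt0r_neq0; lra.
have e0 : eta != 0 by apply: lt0r_neq0; lra.
have -> : tt = (C * eta - 2 * (C - 1)) / (C * eta).
  by rewrite /tt; field; apply/andP.
have h : 0 <= (C - 2) * (eta - 2) by apply: mulr_ge0; lra.
apply: divr_gt0; nra.
Qed.

Lemma tt_lt1 : tt < 1.
Proof.
hyps.
rewrite /tt; have hci : C^-1 <= 2^-1 by rewrite lef_pV2 ?posrE //; lra.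
have : 0 < 2 * (1 - C^-1) / eta.
  apply: divr_gt0; [|lra]. have : 0 < 2^-1 :> R by []. lra.
lra.
Qed.

Lemma qq_gt0 : 0 < qq.
Proof. hyps. by rewrite /qq divr_gt0 // ?tt_gt0; lra. Qed.

Lemma qq_lt1 : qq < 1.
Proof.
hyps.
rewrite /qq ltr_pdivrMr; last lra.
have := tt_lt1; have := tt_gt0; nra.
Qed.

Lemma alg u :
  u * 1 + (1 - u) * 2^-1 - (tt * 1 + (1 - tt) * 2^-1) =
  - eta^-1 * (qq * (u / tt - 1) + (1 - qq) * ((1 - u) / (1 - tt) - 1)).
Proof. hyps. exact: alg0. Qed.

Lemma rew : (fun a => inner thstar (phi a)) = rr.
Proof. hyps. apply: funext => a; rewrite inner2 /thstar /phi; by field. Qed.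

Lemma lnsplit (a b c : R) : 0 < a -> 0 < b -> 0 < c -> ln (a / b) = ln (a / c) - ln (b / c).
Proof.
hyps.
move=> a0 b0 c0.
have := lnM (x := a / b) (y := b / c); rewrite !posrE => H.
have -> : a / c = (a / b) * (b / c) by field; apply/andP; split; rewrite gt_eqF.
rewrite H ?divr_gt0 //; ring.
Qed.

Lemma objdiff (p : bool -> R) u : 0 < u < 1 -> p true = u -> p false = 1 - u ->
  objective rr rf eta p - objective rr rf eta ps =
  eta^-1 * (qq * (ln (u / tt) - (u / tt - 1)) +
            (1 - qq) * (ln ((1 - u) / (1 - tt)) - ((1 - u) / (1 - tt) - 1))).
Proof.
hyps.
move=> /andP[u0 u1] pt pf.
have t0 := tt_gt0; have t1 := tt_lt1; have q0 := qq_gt0; have q1 := qq_lt1.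
rewrite /objective /KL !sum_bool /= pt pf /ps /rf /rr.
rewrite (@lnsplit qq u tt) // (@lnsplit (1 - qq) (1 - u) (1 - tt)); try lra.
have H := alg u.
move: (ln (qq / tt)) (ln (u / tt)) (ln ((1 - qq) / (1 - tt))) (ln ((1 - u) / (1 - tt))) => L1 L2 L3 L4.
apply/eqP; rewrite -subr_eq0; apply/eqP.
transitivity ((u * 1 + (1 - u) * 2^-1 - (tt * 1 + (1 - tt) * 2^-1)) -
  - eta^-1 * (qq * (u / tt - 1) + (1 - qq) * ((1 - u) / (1 - tt) - 1))).
  ring.
by rewrite H subrr.
Qed.


Lemma pol_false (p : bool -> R) : is_policy p -> p false = 1 - p true.
Proof. by case=> _; rewrite sum_bool => <-; ring. Qed.

Lemma ps_opt : is_opt_policy rr rf eta ps.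
Proof.
hyps.
have t0 := tt_gt0; have t1 := tt_lt1; have q0 := qq_gt0; have q1 := qq_lt1.
split; [split; [case => /=; lra| rewrite sum_bool /=; ring]|].
split; first by case => /=; lra.
move=> p' hp' hfs.
have u0 := hfs true; have u1 := hfs false.
rewrite (pol_false _ hp') in u1.
rewrite -subr_le0 (@objdiff p' (p' true)) ?(pol_false _ hp') //; last lra.
have hx : 0 < p' true / tt by apply: divr_gt0.
have hy : 0 < (1 - p' true) / (1 - tt) by apply: divr_gt0; lra.
have l1 := @ln_le_sub1 _ _ hx; have l2 := @ln_le_sub1 _ _ hy.
apply: mulr_ge0_le0; first by rewrite invr_ge0; lra.
have h1 : qq * (ln (p' true / tt) - (p' true / tt - 1)) <= 0 by apply: mulr_ge0_le0; lra.
have h2 : (1 - qq) * (ln ((1 - p' true) / (1 - tt)) - ((1 - p' true) / (1 - tt) - 1)) <= 0.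
  by apply: mulr_ge0_le0; lra.
lra.
Qed.

Lemma opt_unique p : is_opt_policy rr rf eta p -> p true = tt.
Proof.
hyps.
have t0 := tt_gt0; have t1 := tt_lt1; have q0 := qq_gt0; have q1 := qq_lt1.
case=> hp [hfs hopt].
have [hps [hpsf _]] := ps_opt.
have := hopt ps hps hpsf.
have u0 := hfs true; have u1 := hfs false.
rewrite (pol_false _ hp) in u1.
rewrite -subr_ge0 (@objdiff p (p true)) ?(pol_false _ hp) //; last lra.
have hx : 0 < p true / tt by apply: divr_gt0.
have hy : 0 < (1 - p true) / (1 - tt) by apply: divr_gt0; lra.
have l2 := @ln_le_sub1 _ _ hy.
rewrite pmulr_rge0; last by rewrite invr_gt0; lra.
have h2 : (1 - qq) * (ln ((1 - p true) / (1 - tt)) - ((1 - p true) / (1 - tt) - 1)) <= 0.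
  by apply: mulr_ge0_le0; lra.
move=> hs.
have : 0 <= qq * (ln (p true / tt) - (p true / tt - 1)) by lra.
rewrite pmulr_rge0 // => h.
have := @ln_eq_sub1 _ _ hx; rewrite subr_ge0 in h => /(_ h) e.
have : p true = (p true / tt) * tt by field; rewrite gt_eqF.
by rewrite e mul1r.
Qed.

Lemma ratio_bd th1 th2 a : 0 <= D2_ratio phi rf th1 th2 a <= 4.
Proof.
hyps.
have q0 := qq_gt0; have q1 := qq_lt1.
rewrite /D2_ratio /= sum_bool.
set c := (th1 ord0 + th1 (lift ord0 ord0) - (th2 ord0 + th2 (lift ord0 ord0))) / 2.
have hd : forall b, inner th1 (phi b) - inner th2 (phi b) = c * rr b.
  by move=> b; rewrite !inner2 /phi /c; field.
rewrite !hd /rf /rr /=.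
case: ifP => [_|/negbT hden]; first lra.
set den := (X in X == 0) in hden *.
have h0 : 0 <= den.
  by rewrite /den; apply: addr_ge0; apply: mulr_ge0; rewrite ?sqr_ge0 //; lra.
have hpos : 0 < den by rewrite lt_def hden h0.
apply/andP; split; first by apply: divr_ge0; rewrite ?sqr_ge0 // ltW.
rewrite ler_pdivrMr // /den.
case: a => /=; nra.
Qed.

Lemma ratio_low a : 4^-1 <= D2_ratio phi rf thstar (fun _ => 0) a.
Proof.
hyps.
have q0 := qq_gt0; have q1 := qq_lt1.
rewrite /D2_ratio /= sum_bool.
have hd : forall b, inner thstar (phi b) - inner (fun _ => 0) (phi b) = rr b.
  by move=> b; rewrite !inner2 /phi /thstar; field.
rewrite !hd /rf /rr /=.
set den := (X in X == 0).
have hpos : 0 < den by rewrite /den; nra.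
rewrite gt_eqF // ler_pdivlMr //.
case: a => /=; nra.
Qed.

Lemma D2_bd a : 4^-1 <= D2 Theta phi rf a <= 4.
Proof.
hyps.
rewrite /D2; set S := [set x | _].
have ub : ubound S 4.
  move=> x [th1 [th2 [_ [_ ->]]]]; by case/andP: (ratio_bd th1 th2 a).
have mem : S (D2_ratio phi rf thstar (fun _ => 0) a).
  by exists thstar, (fun _ => 0); split; [left|split; [right|]].
apply/andP; split.
  apply: le_trans (ratio_low a) _.
  exact: (ub_le_sup (ex_intro _ 4 ub)).
apply: ge_sup => //; by exists (D2_ratio phi rf thstar (fun _ => 0) a).
Qed.

Lemma D2pi_bd p : is_policy p -> 4^-1 <= D2_pi Theta phi rf p <= 4.
Proof.
hyps.
move=> hp; have [hn _] := hp; have e := pol_false _ hp.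
rewrite /D2_pi sum_bool e.
have /andP[a1 a2] := D2_bd true; have /andP[b1 b2] := D2_bd false.
have n1 := hn true; have n2 := hn false; rewrite e in n2.
apply/andP; split; nra.
Qed.

End Inst.

Theorem propositionB2 (R : realType) :
  exists c1 c2 : R, 0 < c1 /\ 0 < c2 /\
  forall C eta : R, 2 <= C -> 2 <= eta ->
  exists (A : finType) (phi : A -> 'I_2 -> R) (Theta : set ('I_2 -> R))
         (thstar : 'I_2 -> R) (ref : A -> R),
    Theta thstar /\
    (forall a : A, 0 <= inner thstar (phi a) <= 1) /\
    is_policy ref /\ full_support ref /\
    (exists p : A -> R, is_opt_policy (fun a => inner thstar (phi a)) ref eta p) /\
    (forall p : A -> R, is_opt_policy (fun a => inner thstar (phi a)) ref eta p ->
       C / 2 <= cover_coef ref p /\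
       c1 <= D2_pi Theta phi ref p <= c2).
Proof.
exists 4^-1, 4; split; first by rewrite invr_gt0.
split; first by [].
move=> C eta hC he.
exists bool, (phi R), (Theta R), (thstar R), (rf R C eta).
have q0 := qq_gt0 _ _ _ hC he; have q1 := qq_lt1 _ _ _ hC he.
have t0 := tt_gt0 _ _ _ hC he.
split; first by left.
rewrite (rew _ _ _ hC he).
split. move=> a; rewrite inner2 /phi /thstar; case: a; rewrite /rr; apply/andP; split; lra.
split; first by split; [case; rewrite /rf; lra| rewrite sum_bool /=; ring].
split; first by case; rewrite /rf; lra.
split; first by exists (ps R C eta); exact: ps_opt.
move=> p hopt; split; last by apply: D2pi_bd; case: hopt.
have e := opt_unique _ _ _ hC he _ hopt.
rewrite /cover_coef max_bool /= e.
have -> : tt R C eta / qq R C eta = C by rewrite /qq; field; rewrite !gt_eqF //; lra.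
rewrite le_max; apply/orP; left; lra.
Qed.
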